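(* Let $\beta\in(-2,-1)$, $c\in(0,1)$, and let $n\geq 3$ be an integer with $n>\frac{\beta}{c-1}$. Let $x_{1,n}<x_{2,n}<\dots<x_{n,n}$ denote the zeros of the monic Meixner polynomial $M_n(x;\beta,c)$. Then $$0<x_{1,n}<-\beta-1<x_{2,n}<1<-\beta<2<x_{3,n}.$$
   Context: Monic Meixner polynomials are defined by $$M_n(x;\beta,c)=\left(\frac{c}{c-1}\right)^n(\beta)_n\sum_{k=0}^{n}\frac{(-n)_k(-x)_k(1-\frac1c)^k}{(\beta)_k\,k!},$$ for real $\beta,c$ with $c\neq 0$ and $\beta\notin\{-1,-2,\dots,-n+1\}$, where $(\alpha)_0=1$ and $(\alpha)_k=\alpha(\alpha+1)\cdots(\alpha+k-1)$ for $k\geq1$. It is known that for $\beta\in(-2,-1)$, $c\in(0,1)$, $n\ge3$ and $n>\frac{\beta}{c-1}$, all zeros of $M_n(x;\beta,c)$ are real, simple and positive. *)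

(* Defs.v *)
From mathcomp Require Import all_boot all_order all_algebra.
From mathcomp Require Import reals.
Set Implicit Arguments. Unset Strict Implicit. Unset Printing Implicit Defensive.
Import Order.TTheory GRing.Theory Num.Theory.
Local Open Scope ring_scope.

Definition poch {R : pzRingType} (a : R) (k : nat) : R :=
  \prod_(i < k) (a + i%:R).

Definition meixner {R : realType} (n : nat) (beta c x : R) : R :=
  (c / (c - 1)) ^+ n * poch beta n *
  \sum_(k < n.+1)
     (poch (- (n%:R)) k * poch (- x) k * (1 - c^-1) ^+ k)
       / (poch beta k * (k`!)%:R).

(* Main.v *)
Require Import Defs.
From mathcomp Require Import all_boot all_order all_algebra reals.
From mathcomp Require Import ring lra zify.
Set Implicit Arguments. Unset Strict Implicit. Unset Printing Implicit Defensive.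
Import Order.TTheory GRing.Theory Num.Theory.
Local Open Scope ring_scope.

Lemma poch0 {R : realType} (a : R) : poch a 0 = 1.
Proof. by rewrite /poch big_ord0. Qed.

Lemma pochSr {R : realType} (a : R) k : poch a k.+1 = poch a k * (a + k%:R).
Proof. by rewrite /poch big_ord_recr. Qed.

Lemma pochSl {R : realType} (a : R) k : poch a k.+1 = a * poch (a + 1) k.
Proof.
rewrite /poch big_ord_recl /= addr0; congr (_ * _); apply: eq_bigr => i _.
by rewrite /bump /= natrD addrA.
Qed.

Lemma poch_add {R : realType} (a : R) m k : poch a (m + k) = poch a m * poch (a + m%:R) k.
Proof.
elim: k => [|k IH]; first by rewrite addn0 poch0 mulr1.
by rewrite addnS !pochSr IH natrD addrA mulrA.
Qed.

Lemma poch_ge0 {R : realType} (a : R) k : 0 <= a -> 0 <= poch a k.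
Proof.
move=> ha; rewrite /poch; apply: prodr_ge0 => i _; apply: addr_ge0 => //.
Qed.

Lemma poch_gt0 {R : realType} (a : R) k : 0 < a -> 0 < poch a k.
Proof.
move=> ha; rewrite /poch; apply: prodr_gt0 => i _; apply: ltr_wpDr => //.
Qed.

Lemma poch_negnat {R : realType} y k :
  poch (- ((y + k)%:R) : R) k * (y`!)%:R = (-1) ^+ k * ((y + k)`!)%:R.
Proof.
elim: k => [|k IH]; first by rewrite poch0 addn0 mul1r expr0 mul1r || by rewrite poch0 addn0 !mul1r.
rewrite pochSl.
have -> : - (y + k.+1)%:R + 1 = - ((y + k)%:R) :> R by rewrite addnS -addn1 natrD; ring.
rewrite -mulrA IH addnS factS natrM exprS; ring.
Qed.

Lemma poch_negnat0 {R : realType} m k : (m < k)%N -> poch (- (m%:R) : R) k = 0.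
Proof.
move=> hmk; rewrite -(subnKC hmk) poch_add pochSr.
by rewrite addrC subrr mulr0 mul0r.
Qed.

Lemma pochb_ne0 {R : realType} (b : R) k : -2 < b < -1 -> poch b k != 0.
Proof.
move=> /andP[h1 h2]; rewrite /poch; apply/prodf_neq0 => i _.
case: i => [[|[|i]] hi] /=.
- by rewrite addr0 ltr0_neq0 //; lra.
- by rewrite ltr0_neq0 //; lra.
have h : 0 <= i%:R :> R by [].
apply: lt0r_neq0.
have -> : (i.+2)%:R = i%:R + 2 :> R by rewrite -addn2 natrD.
lra.
Qed.

Lemma pochb_gt0 {R : realType} (b : R) k : -2 < b < -1 -> (2 <= k)%N -> 0 < poch b k.
Proof.
move=> /andP[h1 h2] hk; rewrite -(subnKC hk) poch_add.
apply: mulr_gt0; last first.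
  apply: poch_gt0; lra.
rewrite pochSr pochSr poch0 mul1r addr0.
have -> : b + 1%:R = b + 1 by [].
rewrite nmulr_rgt0; lra.
Qed.

Definition van {R : realType} (s : nat -> R) :=
  forall e : R, 0 < e -> exists N0, forall N, (N0 <= N)%N -> `|s N| < e.

Lemma van0 {R : realType} : van (fun _ : nat => 0 : R).
Proof. by move=> e he; exists 0%N => N _; rewrite normr0. Qed.

Lemma vanD {R : realType} (s t : nat -> R) : van s -> van t -> van (fun N => s N + t N).
Proof.
move=> hs ht e he.
have he2 : 0 < e / 2 by lra.
have [N1 h1] := hs _ he2; have [N2 h2] := ht _ he2.
exists (maxn N1 N2) => N hN.
have := h1 N (leq_trans (leq_maxl _ _) hN); have := h2 N (leq_trans (leq_maxr _ _) hN).
move=> a b; apply: le_lt_trans (ler_normD _ _) _; lra.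
Qed.

Lemma vanZ {R : realType} (k : R) (s : nat -> R) : van s -> van (fun N => k * s N).
Proof.
move=> hs e he.
have hk : 0 < `|k| + 1 by have := normr_ge0 k; lra.
have he2 : 0 < e / (`|k| + 1) by apply: divr_gt0.
have [N1 h1] := hs _ he2; exists N1 => N hN.
rewrite normrM; have := h1 N hN => h.
have hn := normr_ge0 (s N).
have : `|s N| * (`|k| + 1) < e by rewrite -ltr_pdivlMr.
nra.
Qed.

Lemma van_ev {R : realType} (s t : nat -> R) :
  (exists N1, forall N, (N1 <= N)%N -> s N = t N) -> van t -> van s.
Proof.
move=> [N1 h1] ht e he; have [N2 h2] := ht _ he.
exists (maxn N1 N2) => N hN; rewrite h1; first by apply: h2 (leq_trans (leq_maxr _ _) hN).
exact: leq_trans (leq_maxl _ _) hN.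
Qed.

Lemma van_shift {R : realType} (s : nat -> R) k : van s -> van (fun N => s (N - k)%N).
Proof.
move=> hs e he; have [N1 h1] := hs _ he; exists (N1 + k)%N => N hN.
apply: h1; lia.
Qed.

Lemma van_sum {R : realType} K (F : nat -> nat -> R) :
  (forall i, (i < K)%N -> van (F i)) -> van (fun N => \sum_(i < K) F i N).
Proof.
elim: K => [|K IH] h.
  by apply: van_ev van0; exists 0%N => N _; rewrite big_ord0.
apply: van_ev (vanD (IH _) (h K _)); last by [].
  by exists 0%N => N _; rewrite big_ord_recr.
by move=> i hi; apply: h; lia.
Qed.

Lemma bernoulli {R : realType} (h : R) d : 0 <= h -> 1 + d%:R * h <= (1 + h) ^+ d.
Proof.
move=> hh; elim: d => [|d IH]; first by rewrite expr0 mul0r addr0.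
rewrite exprS -addn1 natrD.
have hp : 1 <= (1 + h) ^+ d by apply: exprn_ege1; lra.
nra.
Qed.

Lemma van_geom {R : realType} (r K : R) : 0 <= r < 1 -> van (fun d => K * r ^+ d).
Proof.
move=> /andP[r0 r1]; apply: vanZ => e he.
case: (ltrP 0 r) => rpos; last first.
  have r00 : r = 0 by lra.
  by exists 1%N => N hN; rewrite r00 expr0n; case: N hN => // N _; rewrite normr0.
set h := (1 - r) / r.
have hh : 0 < h by apply: divr_gt0; lra.
have hr : r * (1 + h) = 1 by rewrite /h; field; lra.
have [N0 hN0] : exists N0 : nat, 1 / (e * h) < N0%:R.
  exists (Num.Def.archi_bound (1 / (e * h))); apply: archi_boundP.
  apply: ltW; apply: divr_gt0 => //; exact: mulr_gt0.
exists N0 => N hN.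
have hN' : N0%:R <= N%:R :> R by rewrite ler_nat.
have hb := bernoulli N (ltW hh).
have hrN : r ^+ N * (1 + h) ^+ N = 1 by rewrite -exprMn hr expr1n.
have hrN0 : 0 <= r ^+ N by apply: exprn_ge0; lra.
rewrite ger0_norm //.
have heh : 0 < e * h by apply: mulr_gt0.
have hi : 1 / (e * h) * (e * h) = 1 by field; apply/andP; split; lra.
have h1 : 1 < e * h * N0%:R by nra.
have h2 : 1 < e * (1 + h) ^+ N by nra.
nra.
Qed.

Lemma van_le {R : realType} (s t : nat -> R) :
  (exists N1, forall N, (N1 <= N)%N -> `|s N| <= `|t N|) -> van t -> van s.
Proof.
move=> [N1 h1] ht e he; have [N2 h2] := ht _ he.
exists (maxn N1 N2) => N hN; apply: le_lt_trans (h1 N _) (h2 N _); lia.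
Qed.

Definition tm {R : realType} (a c : R) (M : nat) : R := poch a M * c ^+ M / (M`!)%:R.

Lemma tmS {R : realType} (a c : R) M : tm a c M.+1 = tm a c M * ((a + M%:R) * c / (M.+1)%:R).
Proof.
rewrite /tm pochSr exprS factS natrM.
have h1 : (M`!)%:R != 0 :> R by rewrite pnatr_eq0 -lt0n fact_gt0.
have h2 : (M.+1)%:R != 0 :> R by rewrite pnatr_eq0.
rewrite -!mulrA; congr (_ * _); rewrite invfM; ring.
Qed.

Lemma van_tm {R : realType} (a c : R) : 0 < c < 1 -> van (tm a c).
Proof.
move=> /andP[c0 c1].
set r := (1 + c) / 2.
have [N1 hN1] : exists N1 : nat, 2 * `|a| * c / (1 - c) < N1%:R.
  exists (Num.Def.archi_bound (2 * `|a| * c / (1 - c))); apply: archi_boundP.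
  apply: divr_ge0; last lra.
  by apply: mulr_ge0; [apply: mulr_ge0 => //; apply: normr_ge0| lra].
have key : forall d, `|tm a c (N1 + d)| <= `|tm a c N1| * r ^+ d.
  elim => [|d IH]; first by rewrite addn0 expr0 mulr1.
  rewrite addnS tmS normrM exprS.
  set M := (N1 + d)%N.
  have hM : N1%:R <= M%:R :> R by rewrite ler_nat leq_addr.
  have hMp : 0 < (M.+1)%:R :> R by [].
  have hMe : (M.+1)%:R = M%:R + 1 :> R by rewrite -addn1 natrD.
  have hq : `|(a + M%:R) * c / M.+1%:R| <= r.
    rewrite normrM normrM normfV (gtr0_norm c0) (gtr0_norm hMp) ler_pdivrMr //.
    have ha : `|a + M%:R| <= `|a| + M%:R.
      by have := ler_normD a (M%:R); rewrite normr_nat.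
    have hna := normr_ge0 a.
    have hA : 2 * `|a| * c <= N1%:R * (1 - c).
      have hi : 2 * `|a| * c / (1 - c) * (1 - c) = 2 * `|a| * c.
        by field; lra.
      have h1c : 0 < 1 - c by lra.
      by have := hN1; rewrite -(ltr_pM2r h1c) hi => /ltW.
    have h1 : `|a + M%:R| * c <= (`|a| + M%:R) * c by rewrite ler_wpM2r //; lra.
    have h3 : 0 <= (M%:R - N1%:R) * (1 - c) by apply: mulr_ge0; lra.
    rewrite hMe /r.
    clear IH hN1.
    lra.
  rewrite (mulrC r) mulrA; apply: ler_pM => //; exact: normr_ge0.
have r01 : 0 <= r < 1 by rewrite /r; apply/andP; split; lra.
apply: van_le (van_shift N1 (van_geom `|tm a c N1| r01)).
exists N1 => N hN.
have hNN : N = (N1 + (N - N1))%N by rewrite subnKC.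
rewrite {1}hNN; apply: le_trans (key _) _.
have hr0 : 0 <= r ^+ (N - N1) by apply: exprn_ge0; case/andP: r01.
rewrite [X in _ <= X]ger0_norm //; apply: mulr_ge0 => //; exact: normr_ge0.
Qed.

Definition G {R : realType} (a c : R) M := \sum_(y < M.+1) tm a c y.

Lemma tm_shift {R : realType} (a c : R) M : tm a c M.+1 = tm (a + 1) c M * (a * c / (M.+1)%:R).
Proof.
rewrite /tm pochSl exprS factS natrM.
rewrite invfM; ring.
Qed.

Lemma tm0 {R : realType} (a c : R) : tm a c 0 = 1.
Proof. by rewrite /tm poch0 expr0 fact0 invr1 !mulr1. Qed.

Lemma GS {R : realType} (a c : R) M : G a c M.+1 = G a c M + tm a c M.+1.
Proof. by rewrite /G big_ord_recr. Qed.

Lemma G_rec {R : realType} (a c : R) M :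
  (1 - c) * G (a + 1) c M = G a c M - tm (a + 1) c M * c.
Proof.
elim: M => [|M IH].
  by rewrite /G !big_ord_recr !big_ord0 /= !add0r !tm0; ring.
rewrite !GS mulrDr IH (tm_shift a c M) tmS.
have h2 : (M.+1)%:R != 0 :> R by rewrite pnatr_eq0.
have hM : (M.+1)%:R = M%:R + 1 :> R by rewrite -addn1 natrD.
rewrite hM in h2 *.
field => //.
Qed.

Definition Gd {R : realType} (b c : R) i M :=
  G (b + i%:R) c M - ((1 - c)^-1) ^+ i * G b c M.

Lemma van_Gd {R : realType} (b c : R) i : 0 < c < 1 -> van (Gd b c i).
Proof.
move=> hc; have c1 : 1 - c != 0 by apply: lt0r_neq0; case/andP: hc => *; lra.
elim: i => [|i IH].
  by apply: van_ev van0; exists 0%N => N _; rewrite /Gd addr0 expr0 mul1r subrr.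
pose s N := (1 - c)^-1 * Gd b c i N + (- ((1 - c)^-1 * c)) * tm (b + i%:R + 1) c N.
apply: (@van_ev _ _ s); last first.
  by apply: vanD; apply: vanZ => //; apply: van_tm.
exists 0%N => N _; rewrite /s /Gd.
have := G_rec (b + i%:R) c N => h.
have -> : G (b + i.+1%:R) c N = (G (b + i%:R) c N - tm (b + i%:R + 1) c N * c) / (1 - c).
  by rewrite -h -addn1 natrD addrA; field.
by rewrite exprS; field.
Qed.

Lemma van_Gt {R : realType} (b c : R) k : 0 < c < 1 -> van (fun N => G b c (N - k)%N - G b c N).
Proof.
move=> hc; elim: k => [|k IH].
  by apply: van_ev van0; exists 0%N => N _; rewrite subn0 subrr.
pose s N := (G b c (N - k)%N - G b c N) + (-1) * tm b c (N - k)%N.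
apply: (@van_ev _ _ s); last first.
  by apply: vanD => //; apply: vanZ; apply: van_shift; apply: van_tm.
exists k.+1 => N hN; rewrite /s.
have -> : (N - k)%N = (N - k.+1).+1 by lia.
rewrite GS; ring.
Qed.

Lemma alt_step {R : realType} n (P : nat -> R) :
  \sum_(k < n.+2) (-1) ^+ k * 'C(n.+1, k)%:R * P k =
  \sum_(k < n.+1) (-1) ^+ k * 'C(n, k)%:R * (P k - P k.+1).
Proof.
set X := \sum_(k < n.+1) (-1) ^+ k * 'C(n, k)%:R * P k.
set Y := \sum_(k < n.+1) (-1) ^+ k * 'C(n, k)%:R * P k.+1.
set Z := \sum_(k < n.+1) (-1) ^+ k.+1 * 'C(n, k.+1)%:R * P k.+1.
have hX : X = P 0%N + Z.
  have E : \sum_(k < n.+2) (-1) ^+ k * 'C(n, k)%:R * P k = X.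
    by rewrite big_ord_recr /= bin_small // mulr0 mul0r addr0.
  by rewrite -E big_ord_recl /= expr0 bin0 !mul1r.
have hL : \sum_(k < n.+2) (-1) ^+ k * 'C(n.+1, k)%:R * P k = P 0%N - Y + Z.
  rewrite big_ord_recl /= expr0 bin0 !mul1r /Y /Z -addrA; congr (_ + _).
  rewrite -sumrN -big_split /=; apply: eq_bigr => i _.
  by rewrite /bump /= add1n binS natrD exprS; ring.
have hR : \sum_(k < n.+1) (-1) ^+ k * 'C(n, k)%:R * (P k - P k.+1) = X - Y.
  by rewrite /X /Y -sumrB; apply: eq_bigr => i _; ring.
rewrite hL hR hX; ring.
Qed.

Lemma alt_binom {R : realType} n j (a : R) :
  (j < n)%N -> \sum_(k < n.+1) (-1) ^+ k * 'C(n, k)%:R * poch (a + k%:R) j = 0.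
Proof.
elim: n j a => [|n IH] j a hj //.
rewrite (alt_step n (fun k => poch (a + k%:R) j)) /=.
case: j hj => [|j] hj.
  by rewrite big1 // => i _; rewrite !poch0 subrr mulr0.
have -> : \sum_(k < n.+1) (-1) ^+ k * 'C(n, k)%:R * (poch (a + k%:R) j.+1 - poch (a + k.+1%:R) j.+1)
  = - (j.+1%:R) * \sum_(k < n.+1) (-1) ^+ k * 'C(n, k)%:R * poch ((a + 1) + k%:R) j.
  rewrite mulr_sumr; apply: eq_bigr => i _.
  rewrite pochSl pochSr.
  have -> : a + i.+1%:R = a + 1 + i%:R by rewrite -addn1 natrD; ring.
  have -> : a + i%:R + 1 = a + 1 + i%:R by ring.
  have -> : (j.+1)%:R = j%:R + 1 :> R by rewrite -addn1 natrD.
  ring.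
by rewrite IH // mulr0.
Qed.

Lemma fact_neq0 {R : realType} m : (m`!)%:R != 0 :> R.
Proof. by rewrite pnatr_eq0 -lt0n fact_gt0. Qed.

Lemma poch_negn {R : realType} n k : (k <= n)%N ->
  poch (- (n%:R) : R) k = (-1) ^+ k * 'C(n, k)%:R * (k`!)%:R.
Proof.
move=> hk; have := @poch_negnat R (n - k) k; rewrite subnK //.
have := bin_fact hk => /(congr1 (fun m => m%:R : R)); rewrite !natrM => <-.
move=> h; apply: (mulIf (@fact_neq0 R (n - k))); rewrite h; ring.
Qed.

Definition fM {R : realType} n (b c y : R) :=
  \sum_(k < n.+1) 'C(n, k)%:R * ((1 - c) / c) ^+ k * poch (- y) k / poch b k.

Lemma meixner_eq {R : realType} n (b c y : R) : -2 < b < -1 -> 0 < c < 1 ->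
  meixner n b c y = (c / (c - 1)) ^+ n * poch b n * fM n b c y.
Proof.
move=> hb /andP[c0 c1]; rewrite /meixner /fM; congr (_ * _); apply: eq_bigr => [[k hk]] _ /=.
rewrite poch_negn //.
have -> : 1 - c^-1 = - ((1 - c) / c) by field; lra.
rewrite (exprNn ((1 - c) / c)).
have hf := @fact_neq0 R k.
have hp := pochb_ne0 k hb.
have e : (-1) ^+ k * (-1) ^+ k = 1 :> R by rewrite -exprMn mulrNN mulr1 expr1n.
transitivity ((-1) ^+ k * (-1) ^+ k * ('C(n, k)%:R * ((1 - c) / c) ^+ k * poch (- y) k / poch b k)); last by rewrite e mul1r.
field.
by rewrite hf hp.
Qed.

Lemma sum_ge3 {R : realType} (F : nat -> R) n : (2 <= n)%N ->
  (forall k, (3 <= k)%N -> 0 <= F k) ->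
  F 0%N + F 1%N + F 2%N <= \sum_(k < n.+1) F k.
Proof.
move=> hn hF; elim: n hn => [|n IH] // hn.
case: (leqP n 1) => h.
  have -> : n = 1%N by lia.
  by rewrite !big_ord_recr big_ord0 /= add0r.
rewrite big_ord_recr /=; have := IH h; have := hF n.+1 h; lra.
Qed.

Lemma binom_sum {R : realType} n (x : R) :
  \sum_(k < n.+1) 'C(n, k)%:R * x ^+ k = (x + 1) ^+ n.
Proof. by rewrite exprD1n; apply: eq_bigr => i _; rewrite mulr_natl. Qed.

Lemma binom_sumk {R : realType} n (x : R) :
  \sum_(k < n.+2) k%:R * 'C(n.+1, k)%:R * x ^+ k = n.+1%:R * x * (x + 1) ^+ n.
Proof.
rewrite big_ord_recl /= !mul0r add0r -binom_sum mulr_sumr.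
apply: eq_bigr => i _; rewrite /bump /= add1n.
have := mul_bin_diag n.+1 i => /(congr1 (fun m => m%:R : R)); rewrite !natrM /= => <-.
by rewrite exprS; ring.
Qed.

Lemma tau0 {R : realType} n (b c y : R) :
  'C(n, 0)%:R * ((1 - c) / c) ^+ 0 * poch (- y) 0 / poch b 0 = 1.
Proof. by rewrite bin0 !poch0 expr0 invr1 !mulr1. Qed.

Lemma tau1 {R : realType} n (b c y : R) :
  'C(n, 1)%:R * ((1 - c) / c) ^+ 1 * poch (- y) 1 / poch b 1 = n%:R * ((1 - c) / c) * (- y) / b.
Proof. by rewrite bin1 !pochSr !poch0 !mul1r !addr0 expr1. Qed.

Lemma tau2 {R : realType} n (b c y : R) :
  'C(n, 2)%:R * ((1 - c) / c) ^+ 2 * poch (- y) 2 / poch b 2 =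
  (n%:R * (n%:R - 1) / 2) * ((1 - c) / c) ^+ 2 * ((- y) * (- y + 1)) / (b * (b + 1)).
Proof.
rewrite !pochSr !poch0 !mul1r !addr0.
have -> : 'C(n, 2)%:R = n%:R * (n%:R - 1) / 2 :> R.
  case: n => [|n]; first by rewrite bin_small //; ring.
  have := mul_bin_diag n.+1 1 => /(congr1 (fun m => m%:R : R)); rewrite !natrM bin1 /=.
  have -> : n.+1%:R - 1 = n%:R :> R by rewrite -addn1 natrD; ring.
  by move=> h; rewrite h; field.
done.
Qed.

Lemma fM_ge {R : realType} n (b c y : R) : (2 <= n)%N -> -2 < b < -1 -> 0 < c < 1 ->
  (forall k, (3 <= k)%N -> 0 <= poch (- y) k) ->
  1 + n%:R * ((1 - c) / c) * (- y) / b +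
  (n%:R * (n%:R - 1) / 2) * ((1 - c) / c) ^+ 2 * ((- y) * (- y + 1)) / (b * (b + 1))
  <= fM n b c y.
Proof.
move=> hn hb /andP[c0 c1] hp.
rewrite /fM; have := @sum_ge3 R (fun k => 'C(n, k)%:R * ((1 - c) / c) ^+ k * poch (- y) k / poch b k) n hn.
rewrite tau0 tau1 tau2; apply => k hk.
apply: divr_ge0; last by apply: ltW; apply: pochb_gt0 => //; lia.
apply: mulr_ge0; last exact: hp.
apply: mulr_ge0 => //; apply: exprn_ge0; apply: divr_ge0; lra.
Qed.

Lemma F1 {R : realType} n (b c y : R) : (3 <= n)%N -> -2 < b < -1 -> 0 < c < 1 -> y <= 0 ->
  0 < fM n b c y.
Proof.
move=> hn hb hc hy.
apply: lt_le_trans (fM_ge (ltnW hn) hb hc _); last first.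
  move=> k _; apply: poch_ge0; lra.
case/andP: hb => b1 b2; case/andP: hc => c0 c1.
set X := n%:R; set U := (1 - c) / c; set t := - y.
have hX : 3 <= X by rewrite /X (ler_nat R 3 n).
have hU : 0 < U by rewrite /U; apply: divr_gt0; lra.
have ht : 0 <= t by rewrite /t; lra.
have hbb : 0 < b * (b + 1) by rewrite nmulr_rgt0; lra.
set v := X * U * t.
have hv : 0 <= v by rewrite /v; apply: mulr_ge0 => //; apply: mulr_ge0; lra.
have key : 0 < 3 * (b * (b + 1)) + 3 * (v * (b + 1)) + v * v.
  have e : 3 * (b * (b + 1)) + 3 * (v * (b + 1)) + v * v =
           (v + 3 * (b + 1) / 2) ^+ 2 + (b + 1) * (3 * b / 4 - 9 / 4) by field.
  rewrite e; have := sqr_ge0 (v + 3 * (b + 1) / 2).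
  have : 0 < (b + 1) * (3 * b / 4 - 9 / 4) by rewrite nmulr_rgt0; lra.
  lra.
have h2 : v * v / 3 <= X * (X - 1) / 2 * U ^+ 2 * (t * (t + 1)).
  have e : X * (X - 1) / 2 * U ^+ 2 * (t * (t + 1)) - v * v / 3 =
           X * (U * t) * (U * t) * (X - 3) / 6 + X * (X - 1) / 2 * U ^+ 2 * t by rewrite /v; field.
  have : 0 <= X * (U * t) * (U * t) * (X - 3) / 6.
    apply: divr_ge0; last lra.
    apply: mulr_ge0; last lra.
    by apply: mulr_ge0; [apply: mulr_ge0; [lra| apply: mulr_ge0; lra] | apply: mulr_ge0; lra].
  have : 0 <= X * (X - 1) / 2 * U ^+ 2 * t.
    apply: mulr_ge0 => //; apply: mulr_ge0; last by apply: exprn_ge0; lra.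
    apply: divr_ge0; last lra; apply: mulr_ge0; lra.
  lra.
have e : 1 + X * U * t / b + X * (X - 1) / 2 * U ^+ 2 * (t * (t + 1)) / (b * (b + 1)) =
         (b * (b + 1) + v * (b + 1) + X * (X - 1) / 2 * U ^+ 2 * (t * (t + 1))) / (b * (b + 1)).
  rewrite /v; field; apply/andP; split; lra.
rewrite e; apply: divr_gt0 => //; lra.
Qed.

Lemma poch_y12 {R : realType} (y : R) k : 1 <= y <= 2 -> (2 <= k)%N -> 0 <= poch (- y) k.
Proof.
move=> /andP[y1 y2] hk; rewrite -(subnKC hk) poch_add.
apply: mulr_ge0; last by apply: poch_ge0; lra.
rewrite !pochSr poch0 mul1r addr0.
by apply: mulr_le0; lra.
Qed.

Lemma F3 {R : realType} n (b c y : R) : (3 <= n)%N -> -2 < b < -1 -> 0 < c < 1 -> 1 <= y <= 2 ->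
  0 < fM n b c y.
Proof.
move=> hn hb hc hy.
apply: lt_le_trans (fM_ge (ltnW hn) hb hc _); last first.
  by move=> k hk; apply: poch_y12 => //; lia.
case/andP: hb => b1 b2; case/andP: hc => c0 c1; case/andP: hy => y1 y2.
set X := n%:R; set U := (1 - c) / c.
have hX : 3 <= X by rewrite /X (ler_nat R 3 n).
have hU : 0 < U by rewrite /U; apply: divr_gt0; lra.
have t1 : 0 <= X * U * - y / b.
  rewrite -mulrA -mulrA; apply: mulr_ge0; first lra.
  apply: mulr_ge0; first lra.
  by rewrite mulrC; apply: mulr_le0; [rewrite invr_le0|]; lra.
have t2 : 0 <= X * (X - 1) / 2 * U ^+ 2 * (- y * (- y + 1)) / (b * (b + 1)).
  apply: divr_ge0; last by apply: ltW; rewrite nmulr_rgt0; lra.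
  apply: mulr_ge0; last by apply: mulr_le0; lra.
  apply: mulr_ge0; last by apply: exprn_ge0; lra.
  by apply: divr_ge0; [apply: mulr_ge0|]; lra.
lra.
Qed.

Lemma F2 {R : realType} n (b c : R) : (1 <= n)%N -> -2 < b < -1 -> 0 < c < 1 ->
  b / (c - 1) < n%:R -> fM n b c (- b - 1) < 0.
Proof.
move=> hn hb hc hnb.
case/andP: (hb) => b1 b2; case/andP: (hc) => c0 c1.
case: n hn hnb => [|m] // _ hnb.
set U := (1 - c) / c.
have hU : 0 < U by rewrite /U; apply: divr_gt0; lra.
have e : fM m.+1 b c (- b - 1) =
   (b * \sum_(k < m.+2) 'C(m.+1, k)%:R * U ^+ k + \sum_(k < m.+2) k%:R * 'C(m.+1, k)%:R * U ^+ k) / b.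
  rewrite /fM mulr_sumr -big_split mulr_suml; apply: eq_bigr => k _.
  have hp := pochb_ne0 k hb.
  have -> : - (- b - 1) = b + 1 by ring.
  have h : poch (b + 1) k = poch b k * (b + k%:R) / b.
    have := pochSl b k; rewrite pochSr => ->; field; lra.
  rewrite /= /U h; field; rewrite hp /=; lra.
rewrite e binom_sum binom_sumk.
have hm : b + m.+1%:R * (1 - c) > 0.
  have ee : b = b / (c - 1) * (c - 1) by field; lra.
  have : 0 < (m.+1%:R - b / (c - 1)) * (1 - c) by apply: mulr_gt0; lra.
  lra.
have hpos : 0 < (U + 1) ^+ m by apply: exprn_gt0; lra.
have e2 : b * (U + 1) ^+ m.+1 + m.+1%:R * U * (U + 1) ^+ m =
          (U + 1) ^+ m * ((b + m.+1%:R * (1 - c)) / c).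
  by rewrite exprS /U; field; lra.
rewrite e2 pmulr_rlt0; first by rewrite invr_lt0; lra.
apply: mulr_gt0 => //; apply: divr_gt0 => //.
Qed.

Lemma Ik_eq {R : realType} (b c : R) j k N : (k <= N)%N ->
  \sum_(m < N.+1) poch (- (m%:R)) k * poch (m%:R + b) j * tm b c m =
  (-1) ^+ k * c ^+ k * poch b (k + j) * G (b + (k + j)%:R) c (N - k).
Proof.
move=> hk.
rewrite -(big_mkord xpredT (fun m => poch (- (m%:R)) k * poch (m%:R + b) j * tm b c m)).
rewrite (@big_cat_nat _ _ _ k 0 N.+1) //=; last by lia.
rewrite big1_seq /=; last first.
  move=> i; rewrite mem_index_iota => /andP[_ hi].
  by rewrite poch_negnat0 // !mul0r.
rewrite add0r -{1}(add0n k) big_addn.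
have -> : (N.+1 - k = (N - k).+1)%N by lia.
rewrite big_mkord /G mulr_sumr; apply: eq_bigr => y _.
have hy := @fact_neq0 R y.
have e1 : poch (- ((y + k)%:R)) k = (-1) ^+ k * ((y + k)`!)%:R / (y`!)%:R :> R.
  by rewrite -poch_negnat -mulrA mulfV // mulr1.
rewrite e1 /tm.
have e2 : poch b (y + k) * poch ((y + k)%:R + b) j = poch b (k + j) * poch (b + (k + j)%:R) y.
  by rewrite [_ + b]addrC -!poch_add; congr poch; lia.
have hyk := @fact_neq0 R (y + k).
rewrite exprD.
transitivity ((-1) ^+ k * (poch b (y + k) * poch ((y + k)%:R + b) j) * c ^+ y * c ^+ k / (y`!)%:R).
  by field; rewrite hy hyk.
rewrite e2; field; by rewrite hy.
Qed.

Definition Tj {R : realType} n (b c : R) j N :=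
  \sum_(m < N.+1) fM n b c (m%:R) * poch (m%:R + b) j * tm b c m.

Definition hk {R : realType} n (b c : R) j k :=
  'C(n, k)%:R * (-1) ^+ k * (1 - c) ^+ k * poch (b + k%:R) j.

Lemma Tj_eq {R : realType} n (b c : R) j N : -2 < b < -1 -> 0 < c < 1 -> (n <= N)%N ->
  Tj n b c j N = \sum_(k < n.+1) hk n b c j k * G (b + (k + j)%:R) c (N - k).
Proof.
move=> hb /andP[c0 c1] hN.
rewrite /Tj /fM.
under eq_bigr => m _ do rewrite mulr_suml mulr_suml.
rewrite exchange_big /=; apply: eq_bigr => [[k hk']] _ /=.
have -> : \sum_(i < N.+1) 'C(n, k)%:R * ((1 - c) / c) ^+ k * poch (- i%:R) k / poch b k *
     poch (i%:R + b) j * tm b c i =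
   'C(n, k)%:R * ((1 - c) / c) ^+ k / poch b k *
   \sum_(i < N.+1) poch (- i%:R) k * poch (i%:R + b) j * tm b c i.
  by rewrite mulr_sumr; apply: eq_bigr => i _; ring.
rewrite Ik_eq; last by lia.
rewrite /hk poch_add.
have hp := pochb_ne0 k hb.
rewrite expr_div_n.
have hc : c ^+ k != 0 by apply: expf_neq0; lra.
field.
by rewrite hp hc.
Qed.

Lemma hk_sum {R : realType} n (b c : R) j : 0 < c < 1 -> (j < n)%N ->
  \sum_(k < n.+1) hk n b c j k * ((1 - c)^-1) ^+ (k + j) = 0.
Proof.
move=> /andP[c0 c1] hj.
transitivity (((1 - c)^-1) ^+ j * \sum_(k < n.+1) (-1) ^+ k * 'C(n, k)%:R * poch (b + k%:R) j).
  rewrite mulr_sumr; apply: eq_bigr => k _.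
  rewrite /hk exprD.
  have e : (1 - c) ^+ k * ((1 - c)^-1) ^+ k = 1.
    by rewrite -exprMn mulfV ?expr1n //; apply: lt0r_neq0; lra.
  transitivity ((-1) ^+ k * 'C(n, k)%:R * poch (b + k%:R) j * ((1 - c)^-1) ^+ j *
      ((1 - c) ^+ k * ((1 - c)^-1) ^+ k)); first by ring.
  by rewrite e; ring.
by rewrite alt_binom // mulr0.
Qed.

Lemma van_Tj {R : realType} n (b c : R) j : -2 < b < -1 -> 0 < c < 1 -> (j < n)%N ->
  van (Tj n b c j).
Proof.
move=> hb hc hj.
set rho := (1 - c)^-1.
pose F k N := hk n b c j k * Gd b c (k + j) (N - k)%N +
              (hk n b c j k * rho ^+ (k + j)) * (G b c (N - k)%N - G b c N).
apply: (@van_ev _ _ (fun N => \sum_(k < n.+1) F k N)); last first.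
  apply: van_sum => k _; rewrite /F; apply: vanD; apply: vanZ.
    by apply: (van_shift (s := Gd b c (k + j))); apply: van_Gd.
  exact: van_Gt.
exists n => N hN; rewrite Tj_eq //.
have hz := hk_sum b hc hj.
transitivity (\sum_(k < n.+1) F k N + (\sum_(k < n.+1) hk n b c j k * rho ^+ (k + j)) * G b c N).
  rewrite mulr_suml -big_split /=; apply: eq_bigr => k _.
  by rewrite /F /Gd; ring.
by rewrite hz mul0r addr0.
Qed.

Definition inspan {R : realType} (b : R) d (g : R -> R) :=
  exists al : nat -> R, forall y, g y = \sum_(j < d.+1) al j * poch (y + b) j.

Lemma inspan_norm {R : realType} (b : R) d g : inspan b d g ->
  exists al : nat -> R, (forall j, (d < j)%N -> al j = 0) /\
    forall y, g y = \sum_(j < d.+1) al j * poch (y + b) j.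
Proof.
move=> [al h]; exists (fun j => if (j <= d)%N then al j else 0); split.
  by move=> j hj; rewrite leqNgt hj.
by move=> y; rewrite h; apply: eq_bigr => [[j hj]] _ /=; rewrite -ltnS hj.
Qed.

Lemma inspan_const {R : realType} (b a : R) : inspan b 0 (fun _ => a).
Proof. by exists (fun _ => a) => y; rewrite big_ord1 poch0 mulr1. Qed.

Lemma inspan_ext {R : realType} (b : R) d g g' : (forall y, g y = g' y) -> inspan b d g -> inspan b d g'.
Proof. by move=> e [al h]; exists al => y; rewrite -e h. Qed.

Lemma inspan_mono {R : realType} (b : R) d g : inspan b d g -> inspan b d.+1 g.
Proof.
move=> /inspan_norm [al [h0 h]]; exists al => y.
by rewrite big_ord_recr /= h0 // mul0r addr0 h.
Qed.

Lemma inspan_mul {R : realType} (b r : R) d g : inspan b d g ->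
  inspan b d.+1 (fun y => (y - r) * g y).
Proof.
move=> /inspan_norm [al [h0 h]].
exists (fun j => (if j is j'.+1 then al j' else 0) - (b + j%:R + r) * al j) => y.
under [RHS]eq_bigr => j _ do rewrite mulrBl.
rewrite sumrB.
have hA : \sum_(j < d.+2) (if nat_of_ord j is j'.+1 then al j' else 0) * poch (y + b) j =
          \sum_(j < d.+1) al j * poch (y + b) j.+1.
  by rewrite big_ord_recl /= mul0r add0r.
have hB : \sum_(j < d.+2) (b + j%:R + r) * al j * poch (y + b) j =
          \sum_(j < d.+1) (b + j%:R + r) * al j * poch (y + b) j.
  by rewrite big_ord_recr /= h0 // mulr0 mul0r addr0.
rewrite hA hB h mulr_sumr -sumrB; apply: eq_bigr => j _.
rewrite pochSr; ring.
Qed.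

Lemma inspan_prod {R : realType} (b : R) (s : seq nat) (P : pred nat) (x : nat -> R) :
  inspan b (size s) (fun y => \prod_(i <- s | P i) (y - x i)).
Proof.
elim: s => [|i s IH] /=.
  by apply: inspan_ext (@inspan_const R b 1) => y; rewrite big_nil.
case: (boolP (P i)) => hP.
  by apply: inspan_ext (inspan_mul (x i) IH) => y; rewrite big_cons hP.
by apply: inspan_ext (inspan_mono IH) => y; rewrite big_cons (negbTE hP).
Qed.

Lemma van_orth {R : realType} n (b c : R) d g : -2 < b < -1 -> 0 < c < 1 ->
  inspan b d g -> (d < n)%N ->
  van (fun N => \sum_(m < N.+1) fM n b c (m%:R) * g (m%:R) * tm b c m).
Proof.
move=> hb hc [al h] hd.
apply: (@van_ev _ _ (fun N => \sum_(j < d.+1) al j * Tj n b c j N)); last first.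
  apply: (@van_sum _ d.+1 (fun j N => al j * Tj n b c j N)) => j hj.
  apply: vanZ; apply: van_Tj => //; lia.
exists 0%N => N _; rewrite /Tj.
under [RHS]eq_bigr => j _ do rewrite mulr_sumr.
rewrite exchange_big /=; apply: eq_bigr => m _.
rewrite h mulr_sumr mulr_suml; apply: eq_bigr => j _; ring.
Qed.

Lemma coef_monic_hi {R : realType} (p : {poly R}) n j : p \is monic -> size p = n.+1 ->
  (n <= j)%N -> p`_j = (j == n)%:R.
Proof.
move=> hm hs hj; case: (ltngtP j n) => h; first by lia.
  by rewrite nth_default ?hs //.
by rewrite h; have := hm; rewrite monicE /lead_coef hs => /eqP.
Qed.

Definition Qk {R : realType} k : {poly R} := \prod_(i < k) ('X - (i%:R)%:P).

Lemma Qk_monic {R : realType} k : (@Qk R k) \is monic.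
Proof. exact: monic_prod_XsubC. Qed.

Lemma Qk_size {R : realType} k : size (@Qk R k) = k.+1.
Proof. by rewrite /Qk size_prod_XsubC /index_enum -enumT size_enum_ord. Qed.

Lemma Qk_horner {R : realType} k (y : R) : poch (- y) k = (-1) ^+ k * (Qk k).[y].
Proof.
rewrite /Qk horner_prod /poch.
have -> : (-1) ^+ k = (-1) ^+ #|'I_k| :> R by rewrite card_ord.
rewrite -prodrN; apply: eq_bigr => i _.
by rewrite hornerXsubC; ring.
Qed.

Lemma meixner_factor {R : realType} n (b c : R) (x : nat -> R) :
  -2 < b < -1 -> 0 < c < 1 ->
  (forall i j, (i < j < n)%N -> x i < x j) ->
  (forall i, (i < n)%N -> meixner n b c (x i) = 0) ->
  forall y, meixner n b c y = \prod_(i < n) (y - x i).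
Proof.
move=> hb hc hinc hroot.
have hc' := hc; case/andP: hc' => c0 c1.
pose e k := (c / (c - 1)) ^+ n * poch b n * ('C(n, k)%:R * ((1 - c) / c) ^+ k / poch b k) * (-1) ^+ k.
pose pM := \sum_(k < n.+1) e k *: (@Qk R k).
have hev : forall y, pM.[y] = meixner n b c y.
  move=> y; rewrite (meixner_eq _ _ hb hc) /fM horner_sum mulr_sumr; apply: eq_bigr => k _.
  rewrite hornerZ Qk_horner /e.
  move: ((Qk k).[y]) => q; ring.
have hen : e n = 1.
  rewrite /e binn.
  have hp := pochb_ne0 n hb.
  transitivity ((c / (c - 1) * ((1 - c) / c) * (-1)) ^+ n * (poch b n / poch b n)).
    by rewrite !exprMn; ring.
  rewrite mulfV // mulr1.
  have -> : c / (c - 1) * ((1 - c) / c) * (-1) = 1.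
    by field; lra.
  by rewrite expr1n.
pose Q := \prod_(i < n) ('X - (x i)%:P).
have hQm : Q \is monic by apply: monic_prod_XsubC.
have hQs : size Q = n.+1 by rewrite size_prod_XsubC /index_enum -enumT size_enum_ord.
have hQe : forall y, Q.[y] = \prod_(i < n) (y - x i).
  by move=> y; rewrite horner_prod; apply: eq_bigr => i _; rewrite hornerXsubC.
have hD : (size (pM - Q)%R <= n)%N.
  apply/leq_sizeP => j hj.
  rewrite coefB coef_sum big_ord_recr /= coefZ hen mul1r.
  rewrite (coef_monic_hi (Qk_monic n) (Qk_size n) hj) (coef_monic_hi hQm hQs hj).
  rewrite big1 ?add0r ?subrr // => k _.
  rewrite coefZ nth_default ?mulr0 // Qk_size; have := ltn_ord k; lia.
have hD0 : pM - Q = 0.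
  apply/eqP; apply: contraT => hne.
  have hall : all (root (pM - Q)) [seq x i | i <- iota 0 n].
    apply/allP => z /mapP [i]; rewrite mem_iota add0n => /andP[_ hi] ->.
    rewrite /root hornerD hornerN hev hQe hroot //.
    by rewrite (bigD1 (Ordinal hi)) //= subrr mul0r subrr.
  have huniq : uniq [seq x i | i <- iota 0 n].
    rewrite map_inj_in_uniq ?iota_uniq // => i j; rewrite !mem_iota !add0n => /andP[_ hi] /andP[_ hj] hx.
    case: (ltngtP i j) => // h.
      by have := hinc i j; rewrite h hj /= => /(_ isT); rewrite hx ltxx.
    by have := hinc j i; rewrite h hi /= => /(_ isT); rewrite hx ltxx.
  have := max_poly_roots hne hall huniq; rewrite size_map size_iota => h.
  by have := leq_trans h hD; rewrite ltnn.
move=> y; rewrite -hev -hQe; apply/eqP; rewrite -subr_eq0 -hornerN -hornerD hD0 horner0 //.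
Qed.

Lemma inspan_scale {R : realType} (b k : R) d g : inspan b d g -> inspan b d (fun y => k * g y).
Proof.
move=> [al h]; exists (fun j => k * al j) => y; rewrite h mulr_sumr.
by apply: eq_bigr => j _; ring.
Qed.

Lemma inspan_prod' {R : realType} (b : R) (s : seq nat) (P : pred nat) (x : nat -> R) :
  inspan b (size s) (fun y => \prod_(i <- s | P i) (x i - y)).
Proof.
elim: s => [|i s IH] /=.
  by apply: inspan_ext (@inspan_const R b 1) => y; rewrite big_nil.
case: (boolP (P i)) => hP.
  apply: inspan_ext (inspan_scale (-1) (inspan_mul (x i) IH)) => y.
  by rewrite big_cons hP; ring.
by apply: inspan_ext (inspan_mono IH) => y; rewrite big_cons (negbTE hP).
Qed.

Lemma prodP_gt0 {R : realType} (s : seq nat) (P : pred nat) (F : nat -> R) :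
  (forall i, i \in s -> P i -> 0 < F i) -> 0 < \prod_(i <- s | P i) F i.
Proof.
move=> h; rewrite big_seq_cond; apply: prodr_gt0 => i /andP[hi hp]; exact: h.
Qed.

Lemma prodP_ge0 {R : realType} (s : seq nat) (P : pred nat) (F : nat -> R) :
  (forall i, i \in s -> P i -> 0 <= F i) -> 0 <= \prod_(i <- s | P i) F i.
Proof.
move=> h; rewrite big_seq_cond; apply: prodr_ge0 => i /andP[hi hp]; exact: h.
Qed.

Lemma prod_sign {R : realType} (s : seq nat) (P : pred nat) (F G : nat -> R) :
  (forall i, i \in s -> P i -> 0 < F i * G i) ->
  0 < (\prod_(i <- s | P i) F i) * (\prod_(i <- s | P i) G i).
Proof. by move=> h; rewrite -big_split /=; apply: prodP_gt0. Qed.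

Lemma prod_split3 {R : realType} n (F : nat -> R) : (3 <= n)%N ->
  \prod_(i < n) F i = \prod_(0 <= i < 3) F i * \prod_(3 <= i < n) F i.
Proof.
move=> hn; rewrite -(big_mkord xpredT F).
by rewrite (@big_cat_nat _ _ _ 3 0 n).
Qed.

Lemma prod03 {R : realType} (F : nat -> R) : \prod_(0 <= i < 3) F i = F 0%N * F 1%N * F 2%N.
Proof. by rewrite big_mkord !big_ord_recr big_ord0 /= mul1r. Qed.

Lemma orth_contra {R : realType} n (b c K : R) (x : nat -> R) :
  -2 < b < -1 -> 0 < c < 1 -> (3 <= n)%N -> 0 < K ->
  (forall y, \prod_(i < n) (x i - y) = K * fM n b c y) ->
  (forall i j, (i <= j < n)%N -> x i <= x j) ->
  (forall i, (i < n)%N -> 0 < x i) ->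
  (forall i, (i < n)%N -> x i != 1) ->
  x 2%N < 1 -> 0 < \prod_(i < n) (x i - 1) -> False.
Proof.
move=> hb hc hn hK key mono hpos hne1 hx2 hpb.
pose q y := (y - 1) * ((y - 1/2) * \prod_(3 <= i < n | 1 <= x i) (x i - y)).
have hq : inspan b (n - 3).+2 q.
  have := inspan_prod' b (index_iota 3 n) (fun i => 1 <= x i) x.
  rewrite size_iota => h.
  have h2 := inspan_mul (1/2) h.
  have h3 := inspan_mul 1 h2.
  exact: h3.
have hd : ((n - 3).+2 < n)%N by lia.
have hv := van_orth hb hc hq hd.
pose A y := \prod_(0 <= i < 3) (x i - y) * \prod_(3 <= i < n | ~~ (1 <= x i)) (x i - y).
pose B y := \prod_(3 <= i < n | 1 <= x i) (x i - y).
have hAB : forall y, \prod_(i < n) (x i - y) = A y * B y.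
  move=> y; rewrite (prod_split3 (fun i => x i - y)) // [X in _ * X](bigID (fun i => 1 <= x i)) /A /B /=.
  by rewrite mulrA mulrAC.
have hin3 : forall i, i \in index_iota 3 n -> (i < n)%N.
  by move=> i; rewrite mem_index_iota => /andP[].
have hlt1 : forall i, i \in index_iota 0 3 -> x i < 1.
  move=> i; rewrite mem_index_iota => /andP[_ hi].
  by apply: le_lt_trans hx2; apply: mono; lia.
have hpos3 : forall i, i \in index_iota 0 3 -> 0 < x i.
  move=> i; rewrite mem_index_iota => /andP[_ hi]; apply: hpos; lia.
have hA0 : 0 < A 0.
  apply: mulr_gt0; apply: prodP_gt0 => i hi _; rewrite subr0.
    exact: hpos3.
  by apply: hpos; apply: hin3.
have hB0 : 0 < B 0.
  apply: prodP_gt0 => i hi h1; rewrite subr0; lra.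
have hB1 : 0 < B 1.
  apply: prodP_gt0 => i hi h1; have hx := hne1 i (hin3 i hi).
  have : 1 < x i by rewrite lt_neqAle eq_sym hx h1.
  lra.
have hA1 : 0 < A 1.
  by have := hpb; rewrite hAB pmulr_lgt0.
have hAm : forall y, 1 <= y -> 0 < A y.
  move=> y hy.
  have : 0 < A y * A 1.
    rewrite /A.
    set a1 := \prod_(0 <= i < 3) (x i - y); set a2 := \prod_(3 <= i < n | _) (x i - y).
    set a3 := \prod_(0 <= i < 3) (x i - 1); set a4 := \prod_(3 <= i < n | _) (x i - 1).
    have -> : a1 * a2 * (a3 * a4) = (a1 * a3) * (a2 * a4) by ring.
    apply: mulr_gt0; apply: prod_sign => i hi hP.
      by have := hlt1 i hi => h; rewrite nmulr_rgt0; lra.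
    by move: hP; rewrite -ltNge => h; rewrite nmulr_rgt0; lra.
  by rewrite pmulr_lgt0.
have hK0 : K != 0 by apply: lt0r_neq0.
have hfM : forall y, fM n b c y = A y * B y / K.
  by move=> y; rewrite -hAB key mulrC mulKf.
have hfq : forall y, fM n b c y * q y = A y * (B y) ^+ 2 * ((y - 1) * (y - 1/2)) / K.
  by move=> y; rewrite hfM /q -/(B y); field.
have htm : forall m, m != 1%N -> 0 < tm b c m.
  move=> [|[|m]] hm.
  - by rewrite tm0.
  - by rewrite eqxx in hm.
  rewrite /tm; apply: mulr_gt0; last by rewrite invr_gt0 ltr0n fact_gt0.
  apply: mulr_gt0; first by apply: pochb_gt0.
  by apply: exprn_gt0; case/andP: hc.
have hs : forall m : nat, 0 <= fM n b c (m%:R) * q (m%:R) * tm b c m.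
  move=> [|[|m]].
  - apply: mulr_ge0; last by rewrite tm0.
    rewrite hfq; apply: divr_ge0; last lra.
    apply: mulr_ge0; last lra.
    by apply: mulr_ge0; [lra | apply: sqr_ge0].
  - by rewrite /q subrr mul0r mulr0 mul0r.
  - apply: mulr_ge0; last by apply: ltW; apply: htm.
    have hm : 2 <= (m.+2)%:R :> R by rewrite (ler_nat R 2 m.+2).
    rewrite hfq; apply: divr_ge0; last lra.
    apply: mulr_ge0; last by apply: mulr_ge0; lra.
    by apply: mulr_ge0; [apply: ltW; apply: hAm; lra | apply: sqr_ge0].
have hs0 : 0 < fM n b c (0%:R) * q (0%:R) * tm b c 0.
  rewrite tm0 mulr1 hfq; apply: divr_gt0 => //.
  apply: mulr_gt0; last lra.
  by apply: mulr_gt0; [exact: hA0 | apply: exprn_gt0].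
have [N0 hN0] := hv _ hs0.
have := hN0 N0 (leqnn _).
set S := \sum_(m < N0.+1) _.
have hS : fM n b c (0%:R) * q (0%:R) * tm b c 0 <= S.
  rewrite /S big_ord_recl /= lerDl; apply: sumr_ge0 => i _; exact: hs.
have := ler_norm S.
lra.
Qed.

Unset Implicit Arguments.

Theorem lemma4p3 (R : realType) (beta c : R) (n : nat)
  (hb : -2 < beta < -1) (hc : 0 < c < 1) (hn : (3 <= n)%N)
  (hnb : beta / (c - 1) < n%:R)
  (x : nat -> R)
  (hinc : forall i j, (i < j < n)%N -> x i < x j)
  (hroot : forall i, (i < n)%N -> meixner n beta c (x i) = 0)
  (hall : forall y : R, meixner n beta c y = 0 -> exists2 i, (i < n)%N & y = x i) :
  0 < x 0%N /\ x 0%N < - beta - 1 /\ - beta - 1 < x 1%N /\ x 1%N < 1 /\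
  1 < - beta /\ - beta < 2 /\ 2 < x 2%N.
Proof.
have hb' := hb; case/andP: hb' => b1 b2.
have hc' := hc; case/andP: hc' => c0 c1.
have hn2 : (2 <= n)%N by lia.
have hn1 : (1 <= n)%N by lia.
set K := (-1) ^+ n * ((c / (c - 1)) ^+ n * poch beta n).
have hK : 0 < K.
  rewrite /K mulrA -exprMn.
  have -> : -1 * (c / (c - 1)) = c / (1 - c) by field; lra.
  apply: mulr_gt0; first by apply: exprn_gt0; apply: divr_gt0; lra.
  exact: pochb_gt0.
have fac := meixner_factor hb hc hinc hroot.
have key : forall y, \prod_(i < n) (x i - y) = K * fM n beta c y.
  move=> y; rewrite /K -mulrA -(meixner_eq _ _ hb hc) fac.
  have -> : (-1) ^+ n = (-1) ^+ #|'I_n| :> R by rewrite card_ord.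
  rewrite -prodrN; apply: eq_bigr => i _; ring.
have hz : forall i, (i < n)%N -> fM n beta c (x i) = 0.
  move=> i hi; have := key (x i); rewrite (bigD1 (Ordinal hi)) //= subrr mul0r.
  move/esym/eqP; rewrite mulf_eq0 (negbTE (lt0r_neq0 hK)) /=; exact: eqP.
have hpos : forall i, (i < n)%N -> 0 < x i.
  move=> i hi; rewrite ltNge; apply/negP => h.
  by have := F1 hn hb hc h; rewrite hz // ltxx.
have h12 : forall i, (i < n)%N -> 1 <= x i -> 2 < x i.
  move=> i hi h1; rewrite ltNge; apply/negP => h2.
  have hy : 1 <= x i <= 2 by rewrite h1 h2.
  by have := F3 hn hb hc hy; rewrite hz // ltxx.
have ha1 : forall i, (i < n)%N -> x i != - beta - 1.
  move=> i hi; apply/eqP => e.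
  by have := F2 hn1 hb hc hnb; rewrite -e hz // ltxx.
have hne1 : forall i, (i < n)%N -> x i != 1.
  move=> i hi; apply/eqP => e; have := h12 i hi; rewrite e lexx => /(_ isT); lra.
have mono : forall i j, (i <= j < n)%N -> x i <= x j.
  move=> i j /andP[hij hjn]; case: (ltngtP i j) => h; last by rewrite h.
    by apply: ltW; apply: hinc; rewrite h hjn.
  lia.
have fa : \prod_(i < n) (x i - (- beta - 1)) < 0.
  by rewrite key pmulr_rlt0 //; apply: F2.
have f1 : 0 < \prod_(i < n) (x i - 1).
  rewrite key; apply: mulr_gt0 => //; apply: F3 => //; lra.
have hx0a : x 0%N < - beta - 1.
  rewrite ltNge; apply/negP => h.
  have h' : - beta - 1 < x 0%N by rewrite lt_neqAle eq_sym ha1 // h.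
  have : 0 < \prod_(i < n) (x i - (- beta - 1)).
    apply: prodr_gt0 => i _; have := mono 0%N i (ltn_ord i); lra.
  lra.
have hx1 : x 1%N < 1.
  rewrite ltNge; apply/negP => h.
  have h2 := h12 1%N hn2 h.
  have : \prod_(i < n) (x i - 1) < 0.
    rewrite (prod_split3 (fun i => x i - 1)) // prod03.
    have hr : 0 < \prod_(3 <= i < n) (x i - 1).
      apply: prodP_gt0 => i; rewrite mem_index_iota => /andP[hi1 hi2] _.
      have hh : (1 <= i < n)%N by lia.
      have := mono 1%N i hh; lra.
    have hx2' : x 1%N <= x 2%N by apply: mono; lia.
    rewrite pmulr_llt0 // pmulr_llt0; last lra.
    rewrite nmulr_rlt0 /=; lra.
  lra.
have hx2 : 2 < x 2%N.
  rewrite ltNge; apply/negP => h.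
  have h' : x 2%N < 1.
    rewrite ltNge; apply/negP => h1; have := h12 2%N hn h1; lra.
  exact: (orth_contra hb hc hn hK key mono hpos hne1 h' f1).
have hx1a : - beta - 1 < x 1%N.
  rewrite ltNge; apply/negP => h.
  have h' : x 1%N < - beta - 1 by rewrite lt_neqAle ha1 // h.
  have : 0 < \prod_(i < n) (x i - (- beta - 1)).
    rewrite (prod_split3 (fun i => x i - (- beta - 1))) // prod03.
    have hr : 0 < \prod_(3 <= i < n) (x i - (- beta - 1)).
      apply: prodP_gt0 => i; rewrite mem_index_iota => /andP[hi1 hi2] _.
      have hh : (2 <= i < n)%N by lia.
      have := mono 2%N i hh; lra.
    have e0 : x 0%N - (- beta - 1) < 0 by lra.
    have e1 : x 1%N - (- beta - 1) < 0 by lra.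
    have e2 : 0 < x 2%N - (- beta - 1) by lra.
    have e01 : 0 < (x 0%N - (- beta - 1)) * (x 1%N - (- beta - 1)) by rewrite nmulr_rgt0.
    by apply: mulr_gt0 => //; apply: mulr_gt0.
  move=> hp; move: fa; rewrite ltNge; move/negP; apply; exact: ltW.
have := hpos 0%N (ltnW (ltnW hn)).
split; [lra | split; [lra | split; [lra | split; [lra | split; [lra | split; lra]]]]].
Qed.
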